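(* Let $n = 2k+1$ be an odd integer and $m = \binom{n}{2} = k(2k+1)$. If an edge-coloring of a complete graph contains no rainbow $n$-cycle, then it contains no rainbow $m$-cycle.
   Context: A coloring is an arbitrary (not necessarily proper) assignment of colors, from an arbitrary set, to the edges of an undirected complete graph; the graph may be finite or infinite. A rainbow $n$-cycle is a cycle through $n$ distinct vertices whose $n$ edges all receive pairwise distinct colors. *)

(* Defs.v *)
From Stdlib Require Import Arith.

(* An edge-colouring of the complete graph on vertex type V with colours in C
   is a function c : V -> V -> C; it is a colouring of the undirected complete
   graph when c is symmetric (the value c x x is irrelevant). *)
Definition rainbow_cycle {V C : Type} (c : V -> V -> C) (n : nat) : Prop :=
  exists f : nat -> V,
    (forall i j, i < n -> j < n -> f i = f j -> i = j) /\
    (forall i j, i < n -> j < n ->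
       c (f i) (f (S i mod n)) = c (f j) (f (S j mod n)) -> i = j).

(* Main.v *)
Require Import Defs.
From Stdlib Require Import Arith Lia Classical.

Lemma modq (M q z : nat) : M <> 0 -> q * M <= z < (q+1) * M -> z mod M = z - q * M.
Proof.
  intros HM [H1 H2].
  replace z with ((z - q*M) + q * M) at 1 by lia.
  rewrite Nat.mod_add by exact HM.
  apply Nat.mod_small. nia.
Qed.

Lemma mod3 (M z : nat) : M <> 0 -> z < 3 * M ->
  (z < M /\ z mod M = z) \/ (M <= z < 2*M /\ z mod M = z - M) \/ (2*M <= z /\ z mod M = z - 2*M).
Proof.
  intros HM Hz.
  destruct (Nat.lt_ge_cases z M).
  - left. split; auto. apply Nat.mod_small; auto.
  - destruct (Nat.lt_ge_cases z (2*M)).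
    + right; left. split; [lia|]. rewrite (modq M 1 z); lia.
    + right; right. split; [lia|]. rewrite (modq M 2 z); lia.
Qed.

Lemma shift_eq (M a x y : nat) : a < M -> x < 2*M -> y < 2*M ->
  (a + x) mod M = (a + y) mod M -> x = y \/ x = y + M \/ y = x + M.
Proof.
  intros Ha Hx Hy H.
  assert (HM : M <> 0) by lia.
  destruct (mod3 M (a+x) HM) as [[? E1]|[[? E1]|[? E1]]]; try lia;
  destruct (mod3 M (a+y) HM) as [[? E2]|[[? E2]|[? E2]]]; try lia;
  rewrite E1, E2 in H; lia.
Qed.

Lemma Smod (M x : nat) : M <> 0 -> S (x mod M) mod M = S x mod M.
Proof.
  intro HM. replace (S (x mod M)) with (x mod M + 1) by lia.
  replace (S x) with (x + 1) by lia.
  apply Nat.add_mod_idemp_l; auto.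
Qed.

Lemma use_cycle {V C : Type} (c : V -> V -> C) (n : nat) (g : nat -> V) :
  ~ rainbow_cycle c n ->
  (forall i j, i < n -> j < n -> g i = g j -> i = j) ->
  exists i j, i < n /\ j < n /\ i <> j /\ c (g i) (g (S i mod n)) = c (g j) (g (S j mod n)).
Proof.
  intros HN Hg.
  apply NNPP. intro Hno. apply HN. exists g. split; auto.
  intros i j Hi Hj Hc. apply NNPP. intro Hij. apply Hno. exists i, j. auto.
Qed.

Definition colp {V C : Type} (c : V -> V -> C) (f : nat -> V) (M p : nat) : C :=
  c (f p) (f (S p mod M)).
Definition chord {V C : Type} (c : V -> V -> C) (f : nat -> V) (M k a : nat) : C :=
  c (f a) (f ((a + 2*k) mod M)).
Definition Low {V C : Type} (c : V -> V -> C) (f : nat -> V) (M k a : nat) : Prop :=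
  exists t, t < k /\ chord c f M k a = colp c f M ((a + t) mod M).
Definition High {V C : Type} (c : V -> V -> C) (f : nat -> V) (M k a : nat) : Prop :=
  exists t, k <= t < 2*k /\ chord c f M k a = colp c f M ((a + t) mod M).

Definition setup {V C : Type} (c : V -> V -> C) (f : nat -> V) (M k : nat) : Prop :=
  1 <= k /\ M = 2*k*k + k /\ (forall x y, c x y = c y x) /\
  (forall i j, i < M -> j < M -> f i = f j -> i = j) /\
  (forall i j, i < M -> j < M -> colp c f M i = colp c f M j -> i = j) /\
  ~ rainbow_cycle c (2*k+1).

Lemma step1 {V C : Type} (c : V -> V -> C) f M k :
  setup c f M k -> forall a, a < M ->
  exists t, t < 2*k /\ chord c f M k a = colp c f M ((a + t) mod M).
Proof.
  intros [Hk [HM [Hsym [Hf [Hc HN]]]]] a Ha.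
  assert (HM0 : M <> 0) by lia.
  assert (Hkk : k <= k*k) by nia.
  set (g := fun i => f ((a + i) mod M)).
  destruct (use_cycle c (2*k+1) g HN) as [i [j [Hi [Hj [Hij E]]]]].
  { intros i j Hi Hj E. unfold g in E. apply Hf in E; try (apply Nat.mod_upper_bound; auto).
    apply shift_eq in E; lia. }
  assert (Hedge : forall i, i < 2*k+1 ->
     (i < 2*k /\ c (g i) (g (S i mod (2*k+1))) = colp c f M ((a+i) mod M)) \/
     (i = 2*k /\ c (g i) (g (S i mod (2*k+1))) = chord c f M k a)).
  { intros i0 Hi0. destruct (Nat.lt_ge_cases i0 (2*k)).
    - left. split; auto. rewrite (Nat.mod_small (S i0)) by lia.
      unfold g, colp. rewrite Smod by auto. do 2 f_equal. f_equal. lia.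
    - right. split; [lia|]. assert (i0 = 2*k) by lia. subst i0.
      replace (S (2*k)) with (2*k+1) by lia. rewrite Nat.mod_same by lia. unfold g, chord.
      rewrite Nat.add_0_r, (Nat.mod_small a) by auto. apply Hsym. }
  destruct (Hedge i Hi) as [[Hi1 Ei]|[Hi1 Ei]]; destruct (Hedge j Hj) as [[Hj1 Ej]|[Hj1 Ej]];
  rewrite Ei, Ej in E.
  - exfalso. apply Hc in E; try (apply Nat.mod_upper_bound; auto). apply shift_eq in E; lia.
  - exists i. split; auto.
  - exists j. split; auto.
  - lia.
Qed.

Lemma excl {V C : Type} (c : V -> V -> C) f M k :
  setup c f M k -> forall a, a < M -> High c f M k a -> Low c f M k a -> False.
Proof.
  intros HS a Ha [t [Ht E]] [t' [Ht' E']].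
  destruct HS as [Hk [HM [Hsym [Hf [Hc HN]]]]].
  assert (HM0 : M <> 0) by lia.
  rewrite E in E'. apply Hc in E'; try (apply Nat.mod_upper_bound; auto).
  apply shift_eq in E'; nia.
Qed.

Lemma zig {V C : Type} (c : V -> V -> C) f M k :
  setup c f M k -> forall s, s < M ->
  Low c f M k s \/ High c f M k ((s + 2*k*k) mod M).
Proof.
  intros HS s Hs.
  pose proof (step1 c f M k HS) as S1.
  destruct HS as [Hk [HM [Hsym [Hf [Hc HN]]]]].
  assert (HM0 : M <> 0) by lia.
  set (off := fun i => if i <=? k then 2*k*i else 2*k+1-i).
  set (g := fun i => f ((s + off i) mod M)).
  destruct (use_cycle c (2*k+1) g HN) as [i [j [Hi [Hj [Hij E]]]]].
  { intros i j Hi Hj E. unfold g in E. apply Hf in E; try (apply Nat.mod_upper_bound; auto).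
    unfold off in E.
    destruct (Nat.leb_spec i k); destruct (Nat.leb_spec j k);
    (apply shift_eq in E; [|nia|nia|nia]);
    assert (Hk2 : 2*k <= 2*k*k) by nia.
    - assert (2*k*i <= 2*k*k) by nia. assert (2*k*j <= 2*k*k) by nia.
      destruct E as [E|[E|E]]; try nia.
      all: apply (Nat.mul_cancel_l _ _ (2*k)); lia.
    - assert (2*k*i <= 2*k*k) by nia.
      destruct (Nat.eq_dec i 0); [subst; lia|]. assert (2*k <= 2*k*i) by nia. lia.
    - assert (2*k*j <= 2*k*k) by nia.
      destruct (Nat.eq_dec j 0); [subst; lia|]. assert (2*k <= 2*k*j) by nia. lia.
    - lia. }
  assert (Hedge : forall i, i < 2*k+1 ->
     (i <= k /\ c (g i) (g (S i mod (2*k+1))) = chord c f M k ((s + 2*k*i) mod M)) \/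
     (k < i /\ c (g i) (g (S i mod (2*k+1))) = colp c f M ((s + (2*k - i)) mod M))).
  { intros i0 Hi0. destruct (Nat.lt_ge_cases i0 k) as [H0|H0].
    - left. split; [lia|]. rewrite (Nat.mod_small (S i0)) by lia.
      unfold g, chord, off.
      destruct (Nat.leb_spec i0 k); [|lia]. destruct (Nat.leb_spec (S i0) k); [|lia].
      f_equal. f_equal. rewrite Nat.add_mod_idemp_l by auto. f_equal. nia.
    - destruct (Nat.eq_dec i0 k) as [H1|H1].
      + left. subst i0. split; [lia|]. rewrite (Nat.mod_small (S k)) by lia.
        unfold g, chord, off.
        destruct (Nat.leb_spec k k); [|lia]. destruct (Nat.leb_spec (S k) k); [lia|].
        f_equal. f_equal. rewrite Nat.add_mod_idemp_l by auto.
        replace (s + 2*k*k + 2*k) with ((s + (2*k+1 - S k)) + 1 * M) by nia.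
        rewrite Nat.mod_add by auto. reflexivity.
      + right. split; [lia|]. unfold g, colp, off.
        destruct (Nat.leb_spec i0 k); [lia|].
        rewrite Hsym. rewrite Smod by auto.
        assert (Hn : (if S i0 mod (2 * k + 1) <=? k then 2 * k * (S i0 mod (2 * k + 1))
                      else 2 * k + 1 - S i0 mod (2 * k + 1)) = 2*k - i0).
        { destruct (Nat.eq_dec i0 (2*k)) as [H2|H2].
          * subst i0. replace (S (2*k)) with (2*k+1) by lia. rewrite Nat.mod_same by lia.
            simpl. lia.
          * rewrite (Nat.mod_small (S i0)) by lia.
            destruct (Nat.leb_spec (S i0) k); [lia|]. lia. }
        rewrite Hn. do 3 f_equal. lia. }
  destruct (Hedge i Hi) as [[Hi1 Ei]|[Hi1 Ei]]; destruct (Hedge j Hj) as [[Hj1 Ej]|[Hj1 Ej]];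
  rewrite Ei, Ej in E.
  -
    destruct (S1 ((s + 2*k*i) mod M)) as [t [Ht Et]]; [apply Nat.mod_upper_bound; auto|].
    destruct (S1 ((s + 2*k*j) mod M)) as [t' [Ht' Et']]; [apply Nat.mod_upper_bound; auto|].
    rewrite Et, Et' in E. apply Hc in E; try (apply Nat.mod_upper_bound; auto).
    rewrite !Nat.add_mod_idemp_l in E by auto. rewrite <- !Nat.add_assoc in E.
    apply shift_eq in E; try nia.
    destruct E as [E|[E|E]].
    + exfalso. destruct (Nat.lt_ge_cases i j); nia.
    + assert (i = k) by nia. assert (j = 0) by nia. subst i j.
      left. exists t'. split; [nia|].
      rewrite Nat.mul_0_r, Nat.add_0_r, (Nat.mod_small s) in Et' by auto. exact Et'.
    + assert (j = k) by nia. assert (i = 0) by nia. subst i j.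
      left. exists t. split; [nia|].
      rewrite Nat.mul_0_r, Nat.add_0_r, (Nat.mod_small s) in Et by auto. exact Et.
  - destruct (S1 ((s + 2*k*i) mod M)) as [t [Ht Et]]; [apply Nat.mod_upper_bound; auto|].
    rewrite Et in E. apply Hc in E; try (apply Nat.mod_upper_bound; auto).
    rewrite !Nat.add_mod_idemp_l in E by auto. rewrite <- !Nat.add_assoc in E.
    apply shift_eq in E; try nia.
    destruct E as [E|[E|E]].
    + assert (i = 0) by nia. subst i. left. exists t. split; [nia|].
      rewrite Nat.mul_0_r, Nat.add_0_r, (Nat.mod_small s) in Et by auto. exact Et.
    + assert (i = k) by nia. subst i. right. exists t. split; [nia|]. exact Et.
    + exfalso. nia.
  - destruct (S1 ((s + 2*k*j) mod M)) as [t [Ht Et]]; [apply Nat.mod_upper_bound; auto|].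
    rewrite Et in E. symmetry in E. apply Hc in E; try (apply Nat.mod_upper_bound; auto).
    rewrite !Nat.add_mod_idemp_l in E by auto. rewrite <- !Nat.add_assoc in E.
    apply shift_eq in E; try nia.
    destruct E as [E|[E|E]].
    + assert (j = 0) by nia. subst j. left. exists t. split; [nia|].
      rewrite Nat.mul_0_r, Nat.add_0_r, (Nat.mod_small s) in Et by auto. exact Et.
    + assert (j = k) by nia. subst j. right. exists t. split; [nia|]. exact Et.
    + exfalso. nia.
  - exfalso. apply Hc in E; try (apply Nat.mod_upper_bound; auto).
    apply shift_eq in E; nia.
Qed.

Lemma gamma {V C : Type} (c : V -> V -> C) f M k :
  setup c f M k -> exists a, a < M /\ High c f M k a /\ Low c f M k ((a + k) mod M).
Proof.
  intros HS.
  pose proof (step1 c f M k HS) as S1.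
  destruct HS as [Hk [HM [Hsym [Hf [Hc HN]]]]].
  assert (HM0 : M <> 0) by lia.
  assert (Hform : forall i, i < 2*k+1 -> exists u, u <= 2*k /\ (2*k*i) mod M = k*u).
  { intros i Hi. destruct (Nat.le_gt_cases i k).
    - exists (2*i). split; [lia|]. rewrite Nat.mod_small by nia. ring.
    - exists (2*(i-k-1)+1). split; [lia|].
      rewrite (modq M 1) by nia.
      replace i with (k+1+(i-k-1)) at 1 by lia. nia. }
  assert (Hpinj : forall i j, i < 2*k+1 -> j < 2*k+1 -> (2*k*i) mod M = (2*k*j) mod M -> i = j).
  { intros i j Hi Hj E.
    change (2*k*i) with (0 + 2*k*i) in E. change (2*k*j) with (0 + 2*k*j) in E.
    apply shift_eq in E; [|nia|nia|nia].
    destruct E as [E|[E|E]].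
    - apply (Nat.mul_cancel_l _ _ (2*k)); lia.
    - exfalso. assert (k * (2*i) = k * (2*j+2*k+1)) by nia.
      apply Nat.mul_cancel_l in H; lia.
    - exfalso. assert (k * (2*j) = k * (2*i+2*k+1)) by nia.
      apply Nat.mul_cancel_l in H; lia. }
  assert (Claim : forall u u' t t', u <= 2*k -> u' <= 2*k -> u <> u' -> t < 2*k -> t' < 2*k ->
     chord c f M k (k*u) = colp c f M ((k*u + t) mod M) ->
     chord c f M k (k*u') = colp c f M ((k*u' + t') mod M) ->
     k*u + t = k*u' + t' \/ k*u + t = k*u' + t' + M ->
     exists a, a < M /\ High c f M k a /\ Low c f M k ((a + k) mod M)).
  { intros u u' t t' Hu Hu' Huu Ht Ht' Et Et' [E|E].
    - destruct (Nat.lt_ge_cases u u').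
      + assert (u' = u + 1).
        { destruct (Nat.lt_ge_cases u' (u+2)); [lia|]. exfalso.
          assert (k*u' >= k*u + 2*k) by nia. lia. }
        subst u'. exists (k*u). split; [nia|]. split.
        * exists t. split; [nia|]. exact Et.
        * rewrite (Nat.mod_small (k*u+k)) by nia. exists t'. split; [nia|].
          replace (k*u+k) with (k*(u+1)) by ring. rewrite Et'. do 2 f_equal; nia.
      + assert (u = u' + 1).
        { destruct (Nat.lt_ge_cases u (u'+2)); [lia|]. exfalso.
          assert (k*u >= k*u' + 2*k) by nia. lia. }
        subst u. exists (k*u'). split; [nia|]. split.
        * exists t'. split; [nia|]. exact Et'.
        * rewrite (Nat.mod_small (k*u'+k)) by nia. exists t. split; [nia|].
          replace (k*u'+k) with (k*(u'+1)) by ring. rewrite Et. do 2 f_equal; nia.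
    - assert (u = 2*k).
      { destruct (Nat.eq_dec u (2*k)); auto. exfalso. assert (k*u <= k*(2*k-1)) by nia. nia. }
      subst u. assert (u' = 0).
      { destruct (Nat.eq_dec u' 0); auto. exfalso. assert (k*u' >= k) by nia. nia. }
      subst u'. exists (k*(2*k)). split; [nia|]. split.
      + exists t. split; [nia|]. exact Et.
      + replace (k*(2*k)+k) with (0 + 1*M) by nia. rewrite Nat.mod_add by auto.
        rewrite Nat.mod_0_l by auto. exists t'. split; [nia|].
        rewrite Nat.mul_0_r in Et'. exact Et'. }
  set (g := fun i => f ((2*k*i) mod M)).
  destruct (use_cycle c (2*k+1) g HN) as [i [j [Hi [Hj [Hij E]]]]].
  { intros i j Hi Hj E. unfold g in E. apply Hf in E; try (apply Nat.mod_upper_bound; auto).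
    apply Hpinj; auto. }
  assert (Hedge : forall i, i < 2*k+1 ->
     c (g i) (g (S i mod (2*k+1))) = chord c f M k ((2*k*i) mod M)).
  { intros i0 Hi0. unfold g, chord. f_equal. f_equal.
    rewrite Nat.add_mod_idemp_l by auto.
    destruct (Nat.eq_dec i0 (2*k)) as [H2|H2].
    - subst i0. replace (S (2*k)) with (2*k+1) by lia. rewrite Nat.mod_same by lia.
      replace (2*k*(2*k)+2*k) with (0 + 2*M) by nia. rewrite Nat.mod_add by auto.
      f_equal. lia.
    - rewrite (Nat.mod_small (S i0)) by lia. f_equal. nia. }
  rewrite !Hedge in E by auto.
  destruct (Hform i Hi) as [u [Hu Eu]]. destruct (Hform j Hj) as [u' [Hu' Eu']].
  assert (Huu : u <> u').
  { intro H. subst u'. apply Hij. apply Hpinj; auto. congruence. }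
  rewrite Eu, Eu' in E.
  destruct (S1 (k*u)) as [t [Ht Et]]; [nia|].
  destruct (S1 (k*u')) as [t' [Ht' Et']]; [nia|].
  rewrite Et, Et' in E. apply Hc in E; try (apply Nat.mod_upper_bound; auto).
  change (k*u+t) with (0+(k*u+t)) in E. change (k*u'+t') with (0+(k*u'+t')) in E.
  apply shift_eq in E; [|nia|nia|nia].
  destruct E as [E|[E|E]].
  - apply (Claim u u' t t'); auto.
  - apply (Claim u u' t t'); auto.
  - apply (Claim u' u t' t); auto.
Qed.

Theorem lemma9 (V C : Type) (c : V -> V -> C) (k : nat)
  (Hk : 1 <= k) (Hsym : forall x y : V, c x y = c y x) :
  ~ rainbow_cycle c (2 * k + 1) -> ~ rainbow_cycle c (k * (2 * k + 1)).
Proof.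
  intros Hn [f [Hf Hcol]].
  set (M := k * (2*k+1)) in *.
  assert (HS : setup c f M k).
  { refine (conj Hk (conj _ (conj Hsym (conj Hf (conj Hcol Hn))))). unfold M; nia. }
  assert (HM0 : M <> 0) by (unfold M; nia).
  destruct (gamma c f M k HS) as [a [Ha [Hh Hl]]].
  assert (Prop1 : forall x, x < M -> High c f M k x -> High c f M k ((x + 2*k*k) mod M)).
  { intros x Hx Hx'. destruct (zig c f M k HS x Hx) as [L|H]; auto.
    exfalso. apply (excl c f M k HS x Hx Hx' L). }
  assert (It : forall j, High c f M k ((a + j * (2*k*k)) mod M)).
  { induction j.
    - simpl. rewrite Nat.add_0_r, Nat.mod_small by auto. exact Hh.
    - apply Prop1 in IHj; [|apply Nat.mod_upper_bound; auto].
      rewrite Nat.add_mod_idemp_l in IHj by auto.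
      replace (a + S j * (2*k*k)) with (a + j * (2*k*k) + 2*k*k) by nia. exact IHj. }
  specialize (It (2*k)).
  replace (a + 2*k*(2*k*k)) with ((a + k) + (2*k-1) * M) in It by (unfold M; destruct k; [lia|]; nia).
  rewrite Nat.mod_add in It by auto.
  apply (excl c f M k HS ((a+k) mod M)); auto. apply Nat.mod_upper_bound; auto.
Qed.
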